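(* For the hypergeometric weights described in the context, \[ (\vartheta H)H^{-1}=\alpha,\qquad -\phi=(\Lambda^\top)^2\gamma+\Lambda^\top\beta,\qquad -\tilde\phi=\Lambda^\top(\mathfrak a_-H)H^{-1}. \]
   Context: Weights on $\mathbb N_0$: $w^{(a)}(k)=\frac{(b^{(a)}_1)_k\cdots(b^{(a)}_{M^{(a)}})_k}{(c_1)_k\cdots(c_N)_k}\frac{(\eta^{(a)})^k}{k!}$, $a\in\{1,2\}$, convergent series. Moment matrix (indices from 0): $\mathscr M_{n,2m}=\sum_k k^{n+m}w^{(1)}(k)$, $\mathscr M_{n,2m+1}=\sum_k k^{n+m}w^{(2)}(k)$, with all leading principal minors nonzero, so $\mathscr M=S^{-1}H\tilde S^{-\top}$ ($S,\tilde S$ lower unitriangular, $H=\operatorname{diag}(H_0,H_1,\dots)$), depending on $(\eta^{(1)},\eta^{(2)})$. $\Lambda$ has ones on the first superdiagonal; $S\Lambda S^{-1}=(\Lambda^\top)^2\gamma+\Lambda^\top\beta+\alpha+\Lambda$ with diagonal $\alpha,\beta,\gamma$. $\vartheta^{(a)}=\eta^{(a)}\partial/\partial\eta^{(a)}$, $\vartheta=\vartheta^{(1)}+\vartheta^{(2)}$, $\phi=(\vartheta S)S^{-1}$, $\tilde\phi=(\vartheta\tilde S)\tilde S^{-1}$. $\mathfrak a_-\operatorname{diag}(m_0,m_1,\dots)=\operatorname{diag}(m_1,m_2,\dots)$. *)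

(* Defs.v *)
From Stdlib Require Import Reals.
From Coquelicot Require Import Coquelicot.
From mathcomp Require Import all_boot all_algebra.
From mathcomp Require Import Rstruct.

Open Scope R_scope.

Fixpoint poch (b : R) (k : nat) : R :=
  match k with O => 1 | S k' => poch b k' * (b + INR k') end.

Fixpoint prodR (l : list R) : R :=
  match l with nil => 1 | cons x l' => x * prodR l' end.

Definition hweight (bs cs : list R) (eta : R) (k : nat) : R :=
  prodR (List.map (fun b => poch b k) bs) / prodR (List.map (fun c => poch c k) cs)
  * eta ^ k / INR (Factorial.fact k).

Fixpoint sumR (n : nat) (f : nat -> R) : R :=
  match n with O => 0 | S n' => sumR n' f + f n' end.

(* Semi-infinite matrices, indices from 0. *)
Definition mat := nat -> nat -> R.

(* Product A B, valid (a genuine finite sum) whenever A i k = 0 for k > i+1,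
   which is the case for every left factor used below (lower triangular
   matrices, diagonal matrices, Lambda, Lambda^T, S Lambda). *)
Definition mmul (A B : mat) : mat :=
  fun i j => sumR (S (S i)) (fun k => A i k * B k j).
Definition madd (A B : mat) : mat := fun i j => A i j + B i j.
Definition mopp (A : mat) : mat := fun i j => - A i j.
Definition mid : mat := fun i j => if Nat.eqb i j then 1 else 0.
Definition diagm (d : nat -> R) : mat := fun i j => if Nat.eqb i j then d i else 0.
Definition Lam : mat := fun i j => if Nat.eqb j (S i) then 1 else 0.
Definition LamT : mat := fun i j => Lam j i.

Definition lower_unitri (A : mat) : Prop :=
  (forall i j, (i < j)%nat -> A i j = 0) /\ (forall i, A i i = 1).

Definition moment_term (w : nat -> R) (p : nat) : nat -> R :=
  fun k => INR k ^ p * w k.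
Definition Mom (b1 b2 cs : list R) (eta : R * R) : mat :=
  fun n j => if Nat.even j
             then Series (moment_term (hweight b1 cs (fst eta)) (n + Nat.div2 j))
             else Series (moment_term (hweight b2 cs (snd eta)) (n + Nat.div2 j)).

Definition trunc (A : mat) (N : nat) : 'M[R]_N :=
  \matrix_(i < N, j < N) A (nat_of_ord i) (nat_of_ord j).

(* Gauss--Borel factorization  M = S^{-1} H St^{-T}, written as
   S M St^T = H (all sums are finite since S, St are lower triangular). *)
Definition gauss_borel (M Sm St : mat) (H : nat -> R) : Prop :=
  forall n m,
    sumR (S n) (fun k => sumR (S m) (fun l => Sm n k * M k l * St m l))
    = (if Nat.eqb n m then H n else 0).

Definition theta_mat (F : R * R -> mat) (eta : R * R) : mat :=
  fun i j => fst eta * Derive (fun x => F (x, snd eta) i j) (fst eta)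
           + snd eta * Derive (fun y => F (fst eta, y) i j) (snd eta).
Definition theta_vec (F : R * R -> nat -> R) (eta : R * R) : nat -> R :=
  fun n => fst eta * Derive (fun x => F (x, snd eta) n) (fst eta)
         + snd eta * Derive (fun y => F (fst eta, y) n) (snd eta).

Definition lead_minor (A : mat) (N : nat) : R := (\det (trunc A N))%R.

(* Main.v *)
Require Import Defs.
From Stdlib Require Import Reals.
From Coquelicot Require Import Coquelicot.
From mathcomp Require Import all_boot all_algebra.
From mathcomp Require Import Rstruct.
From Stdlib Require Import Lra Lia FunctionalExtensionality Wf_nat Arith.
From mathcomp Require Import zify.
Open Scope R_scope.

Lemma sumR_ext n f g : (forall k, (k < n)%coq_nat -> f k = g k) -> sumR n f = sumR n g.
Proof.
  induction n as [|n IH]; intros H; simpl; [reflexivity|].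
  rewrite IH; [rewrite H; [reflexivity|lia]|intros k Hk; apply H; lia].
Qed.

Lemma sumR_plus n f g : sumR n (fun k => f k + g k) = sumR n f + sumR n g.
Proof. induction n as [|n IH]; simpl; [lra|rewrite IH; lra]. Qed.

Lemma sumR_mult_l n c f : c * sumR n f = sumR n (fun k => c * f k).
Proof. induction n as [|n IH]; simpl; [lra|rewrite <- IH; lra]. Qed.

Lemma sumR_mult_r n c f : sumR n f * c = sumR n (fun k => f k * c).
Proof. induction n as [|n IH]; simpl; [lra|rewrite <- IH; lra]. Qed.

Lemma sumR_opp n f : - sumR n f = sumR n (fun k => - f k).
Proof. induction n as [|n IH]; simpl; [lra|rewrite <- IH; lra]. Qed.

Lemma sumR_zero n f : (forall k, (k < n)%coq_nat -> f k = 0) -> sumR n f = 0.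
Proof.
  intros H. transitivity (sumR n (fun _ => 0)).
  apply sumR_ext; auto. clear H; induction n; simpl; [lra|rewrite IHn; lra].
Qed.

Lemma sumR_ext_len n m f : (n <= m)%coq_nat ->
  (forall k, (n <= k)%coq_nat -> (k < m)%coq_nat -> f k = 0) -> sumR m f = sumR n f.
Proof.
  intros Hnm H. induction m as [|m IH].
  - assert (n = 0%nat) by lia. subst. reflexivity.
  - destruct (Nat.eq_dec n (S m)) as [->|Hne]; [reflexivity|].
    simpl. rewrite IH; [|lia|intros; apply H; lia]. rewrite (H m); [lra|lia|lia].
Qed.

Lemma sumR_swap n m (f : nat -> nat -> R) :
  sumR n (fun i => sumR m (fun j => f i j)) = sumR m (fun j => sumR n (fun i => f i j)).
Proof.
  induction n as [|n IH]; simpl.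
  - symmetry; apply sumR_zero; reflexivity.
  - rewrite IH. rewrite <- sumR_plus. reflexivity.
Qed.

Lemma sumR_single n j f : (j < n)%coq_nat -> (forall k, (k < n)%coq_nat -> k <> j -> f k = 0) ->
  sumR n f = f j.
Proof.
  intros Hj H. induction n as [|n IH]; [lia|]. simpl.
  destruct (Nat.eq_dec j n) as [->|Hne].
  - rewrite sumR_zero; [lra|]. intros k Hk; apply H; lia.
  - rewrite IH; [|lia|intros; apply H; lia]. rewrite (H n); [lra|lia|lia].
Qed.

Lemma sumR_S n f : sumR (S n) f = sumR n f + f n.
Proof. reflexivity. Qed.

Definition band1 (X : mat) := forall i k, (S i < k)%coq_nat -> X i k = 0.
Definition lowerm (X : mat) := forall i k, (i < k)%coq_nat -> X i k = 0.

Lemma lower_band1 X : lowerm X -> band1 X.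
Proof. intros H i k Hk; apply H; lia. Qed.

Lemma mmul_assoc X Y Z : band1 X -> band1 Y ->
  (forall i, sumR (S (S i)) (fun l => X i l * Y l (S (S i))) = 0) ->
  mmul (mmul X Y) Z = mmul X (mmul Y Z).
Proof.
  intros HX HY H0. extensionality i. extensionality j. unfold mmul.
  transitivity (sumR (S (S (S i))) (fun k => sumR (S (S i)) (fun l => X i l * Y l k) * Z k j)).
  { rewrite (sumR_S (S (S i))) H0. lra. }
  transitivity (sumR (S (S i)) (fun l => X i l * sumR (S (S (S i))) (fun k => Y l k * Z k j))).
  { rewrite (sumR_ext _ _ (fun k => sumR (S (S i)) (fun l => X i l * (Y l k * Z k j)))).
    2:{ intros k _. rewrite sumR_mult_r. apply sumR_ext. intros; lra. }
    rewrite sumR_swap. apply sumR_ext. intros l _. rewrite sumR_mult_l. reflexivity. }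
  apply sumR_ext. intros l Hl. f_equal. apply sumR_ext_len; [lia|].
  intros k Hk1 Hk2. rewrite HY; [lra|lia].
Qed.

Lemma lower_assoc_cond X Y : lowerm Y -> forall i, sumR (S (S i)) (fun l => X i l * Y l (S (S i))) = 0.
Proof. intros HY i. apply sumR_zero. intros l Hl. rewrite HY; [lra|lia]. Qed.

Lemma mid_eq i : mid i i = 1.
Proof. unfold mid; rewrite Nat.eqb_refl; reflexivity. Qed.
Lemma mid_neq i j : i <> j -> mid i j = 0.
Proof. intros H; unfold mid; apply Nat.eqb_neq in H; rewrite H; reflexivity. Qed.

Lemma lu_low T : lower_unitri T -> lowerm T.
Proof. intros [H _] i k Hk. apply H. apply/ltP. exact Hk. Qed.

Lemma lu_of T : lowerm T -> (forall i, T i i = 1) -> lower_unitri T.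
Proof. intros H1 H2; split; auto. intros i j Hij. apply H1. apply/ltP. exact Hij. Qed.

Lemma mmul_row_split T X i j : lowerm T ->
  mmul T X i j = sumR i (fun k => T i k * X k j) + T i i * X i j.
Proof.
  intros HT. unfold mmul. rewrite sumR_S sumR_S (HT i (S i)); [lra|lia].
Qed.

Lemma mmul_mid_l X : mmul mid X = X.
Proof.
  extensionality i; extensionality j. unfold mmul.
  rewrite (sumR_single _ i); [|lia|]. rewrite mid_eq; lra.
  intros k _ Hk. rewrite mid_neq; [lra|lia].
Qed.

Lemma mmul_mid_r X : lowerm X -> mmul X mid = X.
Proof.
  intros HX. extensionality i; extensionality j. unfold mmul.
  destruct (Nat.lt_ge_cases (S i) j) as [Hj|Hj].
  - rewrite HX; [|lia]. apply sumR_zero. intros k Hk. rewrite mid_neq; [lra|lia].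
  - rewrite (sumR_single _ j); [|lia|]. rewrite mid_eq; lra.
    intros k _ Hk. rewrite mid_neq; [lra|lia].
Qed.

Lemma inv_lower T K : lower_unitri T -> mmul T K = mid -> lower_unitri K /\ mmul K T = mid.
Proof.
  intros HT HTK. pose proof (lu_low _ HT) as HTl. destruct HT as [_ HTd].
  assert (HK : forall i, (forall j, (i < j)%coq_nat -> K i j = 0) /\ K i i = 1).
  { intro i. induction i as [i IH] using lt_wf_ind.
    assert (E : forall j, K i j = mid i j - sumR i (fun k => T i k * K k j)).
    { intro j. rewrite <- HTK. rewrite mmul_row_split; auto. rewrite HTd. lra. }
    split.
    - intros j Hj. rewrite E mid_neq; [|lia]. rewrite sumR_zero; [lra|].
      intros k Hk. rewrite (proj1 (IH k Hk) j); [lra|lia].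
    - rewrite E mid_eq sumR_zero; [lra|]. intros k Hk. rewrite (proj1 (IH k Hk) i); [lra|lia]. }
  assert (HKl : lower_unitri K).
  { apply lu_of; [intros i j; apply (proj1 (HK i))|intro i; apply (proj2 (HK i))]. }
  split; [exact HKl|].
  set (X := mmul K T).
  assert (HX : mmul T X = T).
  { unfold X. rewrite <- mmul_assoc.
    - rewrite HTK. apply mmul_mid_l.
    - apply lower_band1; auto.
    - apply lower_band1, lu_low; auto.
    - apply lower_assoc_cond, lu_low; auto. }
  extensionality i. induction i as [i IH] using lt_wf_ind. extensionality j.
  assert (E : X i j = T i j - sumR i (fun k => T i k * X k j)).
  { assert (E0 : mmul T X i j = T i j) by (rewrite HX; reflexivity).
    rewrite mmul_row_split in E0; auto. rewrite HTd in E0. lra. }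
  rewrite E. rewrite (sumR_ext _ _ (fun k => T i k * mid k j)).
  2:{ intros k Hk. rewrite IH; auto. }
  destruct (Nat.lt_ge_cases j i) as [Hj|Hj].
  - rewrite (sumR_single _ j); auto. rewrite mid_eq mid_neq; [lra|lia].
    intros k _ Hk. rewrite mid_neq; [lra|lia].
  - rewrite sumR_zero. 2:{ intros k Hk. rewrite mid_neq; [lra|lia]. }
    destruct (Nat.eq_dec i j) as [->|Hne].
    + rewrite HTd mid_eq; lra.
    + rewrite HTl; [|lia]. rewrite mid_neq; auto. lra.
Qed.
Definition Dat (f : R * R -> R) (e : R * R) : Prop :=
  ex_derive (fun x => f (x, snd e)) (fst e) /\ ex_derive (fun y => f (fst e, y)) (snd e).
Definition th (f : R * R -> R) (e : R * R) : R :=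
  fst e * Derive (fun x => f (x, snd e)) (fst e) + snd e * Derive (fun y => f (fst e, y)) (snd e).

Lemma Dat_const c e : Dat (fun _ => c) e.
Proof. split; apply ex_derive_const. Qed.
Lemma th_const c e : th (fun _ => c) e = 0.
Proof. unfold th. rewrite !Derive_const. lra. Qed.

Lemma Dat_plus f g e : Dat f e -> Dat g e -> Dat (fun e => f e + g e) e.
Proof. intros [H1 H2] [H3 H4]; split; apply: ex_derive_plus; auto. Qed.
Lemma th_plus f g e : Dat f e -> Dat g e -> th (fun e => f e + g e) e = th f e + th g e.
Proof.
  intros [H1 H2] [H3 H4]; unfold th.
  have E1 : Derive (fun x : R => f (x, snd e) + g (x, snd e)) (fst e) = Derive (fun x : R => f (x, snd e)) (fst e) + Derive (fun x : R => g (x, snd e)) (fst e) := Derive_plus _ _ _ H1 H3.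
  have E2 : Derive (fun y : R => f (fst e, y) + g (fst e, y)) (snd e) = Derive (fun y : R => f (fst e, y)) (snd e) + Derive (fun y : R => g (fst e, y)) (snd e) := Derive_plus _ _ _ H2 H4.
  rewrite E1 E2. lra.
Qed.

Lemma Dat_mult f g e : Dat f e -> Dat g e -> Dat (fun e => f e * g e) e.
Proof. intros [H1 H2] [H3 H4]; split; apply: ex_derive_mult; auto. Qed.
Lemma th_mult f g e : Dat f e -> Dat g e -> th (fun e => f e * g e) e = th f e * g e + f e * th g e.
Proof.
  intros [H1 H2] [H3 H4]; unfold th.
  have E1 : Derive (fun x : R => f (x, snd e) * g (x, snd e)) (fst e) = Derive (fun x : R => f (x, snd e)) (fst e) * g (fst e, snd e) + f (fst e, snd e) * Derive (fun x : R => g (x, snd e)) (fst e) := Derive_mult _ _ _ H1 H3.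
  have E2 : Derive (fun y : R => f (fst e, y) * g (fst e, y)) (snd e) = Derive (fun y : R => f (fst e, y)) (snd e) * g (fst e, snd e) + f (fst e, snd e) * Derive (fun y : R => g (fst e, y)) (snd e) := Derive_mult _ _ _ H2 H4.
  rewrite E1 E2. destruct e; simpl. lra.
Qed.

Lemma Dat_opp f e : Dat f e -> Dat (fun e => - f e) e.
Proof. intros [H1 H2]; split; apply: ex_derive_opp; auto. Qed.
Lemma th_opp f e : th (fun e => - f e) e = - th f e.
Proof. unfold th. rewrite !Derive_opp. lra. Qed.

Lemma Dat_inv f e : Dat f e -> f e <> 0 -> Dat (fun e => / f e) e.
Proof. intros [H1 H2] Hne; destruct e as [x y]; split; apply: ex_derive_inv; auto. Qed.

Lemma Dat_sumR n (f : nat -> R * R -> R) e : (forall k, (k < n)%coq_nat -> Dat (f k) e) ->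
  Dat (fun e => sumR n (fun k => f k e)) e.
Proof.
  induction n as [|n IH]; intros H; simpl.
  - apply Dat_const.
  - apply Dat_plus; [apply IH; intros; apply H; lia| apply H; lia].
Qed.
Lemma th_sumR n (f : nat -> R * R -> R) e : (forall k, (k < n)%coq_nat -> Dat (f k) e) ->
  th (fun e => sumR n (fun k => f k e)) e = sumR n (fun k => th (f k) e).
Proof.
  induction n as [|n IH]; intros H; simpl.
  - apply th_const.
  - rewrite th_plus; [|apply Dat_sumR; intros; apply H; lia|apply H; lia].
    rewrite IH //. intros; apply H; lia.
Qed.

Section Loc.
Variable U : R * R -> Prop.
Hypothesis HU : open U.

Lemma loc_x e : U e -> locally (fst e) (fun x => U (x, snd e)).
Proof.
  intros He. destruct (HU e He) as [eps Heps]. exists eps. intros x Hx.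
  apply Heps. split; [exact Hx| apply ball_center].
Qed.
Lemma loc_y e : U e -> locally (snd e) (fun y => U (fst e, y)).
Proof.
  intros He. destruct (HU e He) as [eps Heps]. exists eps. intros y Hy.
  apply Heps. split; [apply ball_center| exact Hy].
Qed.

Lemma Dat_loc f g e : U e -> (forall e', U e' -> f e' = g e') -> Dat g e -> Dat f e.
Proof.
  intros He Hfg [H1 H2]; split.
  - apply: ex_derive_ext_loc H1. destruct (loc_x e He) as [eps Heps]. exists eps.
    intros x Hx. symmetry. apply Hfg, Heps, Hx.
  - apply: ex_derive_ext_loc H2. destruct (loc_y e He) as [eps Heps]. exists eps.
    intros x Hx. symmetry. apply Hfg, Heps, Hx.
Qed.

Lemma th_loc f g e : U e -> (forall e', U e' -> f e' = g e') -> th f e = th g e.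
Proof.
  intros He Hfg. unfold th. f_equal; f_equal; apply Derive_ext_loc.
  - destruct (loc_x e He) as [eps Heps]. exists eps. intros x Hx. apply Hfg, Heps, Hx.
  - destruct (loc_y e He) as [eps Heps]. exists eps. intros x Hx. apply Hfg, Heps, Hx.
Qed.

Definition DU f := forall e, U e -> Dat f e.
End Loc.
Definition acoef bs cs p : nat -> R := fun k =>
  INR k ^ p * (prodR (List.map (fun b => poch b k) bs) / prodR (List.map (fun c => poch c k) cs)
   / INR (Factorial.fact k)).

Lemma mom_coef bs cs p x k : moment_term (hweight bs cs x) p k = acoef bs cs p k * x ^ k.
Proof. unfold moment_term, hweight, acoef, Rdiv. ring. Qed.

Lemma mom_pseries bs cs p x : Series (moment_term (hweight bs cs x) p) = PSeries (acoef bs cs p) x.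
Proof.
  unfold PSeries. apply Series_ext. intros k. unfold moment_term, hweight, acoef, Rdiv. ring.
Qed.

Lemma bounded_of_series (u : nat -> R) : ex_series u -> exists M, forall n, Rabs (u n) <= M.
Proof.
  intros H. apply ex_series_lim_0 in H. apply is_lim_seq_Reals in H.
  apply cv_cvabs in H.
  assert (Hc := CV_Cauchy (fun i => Rabs (u i)) (exist _ _ H)).
  destruct (cauchy_bound _ Hc) as [m Hm]. exists m. intros n. apply Hm. exists n. reflexivity.
Qed.

Lemma radius_ge a x1 : ex_series (fun k => a k * x1 ^ k) -> Rbar_le (Rabs x1) (CV_radius a).
Proof.
  intros H. destruct (bounded_of_series _ H) as [M HM].
  destruct (CV_radius_bounded a) as [Hub _]. apply Hub. exists M. intros n.
  rewrite Rabs_mult RPow_abs Rabs_Rabsolu -Rabs_mult. apply HM.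
Qed.

Lemma mom_1d bs cs p x0 x1 : Rabs x0 < Rabs x1 ->
  ex_series (moment_term (hweight bs cs x1) p) ->
  ex_derive (fun x => Series (moment_term (hweight bs cs x) p)) x0 /\
  x0 * Derive (fun x => Series (moment_term (hweight bs cs x) p)) x0
    = Series (moment_term (hweight bs cs x0) (S p)).
Proof.
  intros Hlt Hs.
  assert (Hr : Rbar_lt (Rabs x0) (CV_radius (acoef bs cs p))).
  { apply Rbar_lt_le_trans with (Rabs x1); [exact Hlt|]. apply radius_ge.
    apply: ex_series_ext Hs. intros k. exact (mom_coef bs cs p x1 k). }
  assert (E : (fun x => Series (moment_term (hweight bs cs x) p)) = PSeries (acoef bs cs p)).
  { extensionality x. apply mom_pseries. }
  rewrite E. split; [apply ex_derive_PSeries; exact Hr|].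
  rewrite Derive_PSeries // -PSeries_incr_1 mom_pseries.
  apply PSeries_ext. intros [|k]; unfold PS_incr_1, PS_derive, acoef; simpl.
  - rewrite /zero /=. ring.
  - ring.
Qed.
Lemma bigger_pt (P : R -> Prop) x : locally x P -> exists x1, Rabs x < Rabs x1 /\ P x1.
Proof.
  intros [eps Heps]. destruct (Rle_dec 0 x) as [Hx|Hx].
  - exists (x + eps / 2). pose proof (cond_pos eps). split.
    + rewrite !Rabs_right; lra.
    + apply Heps. rewrite /ball /= /AbsRing_ball /abs /minus /plus /Hierarchy.opp /=.
      rewrite Rabs_right; lra.
  - exists (x - eps / 2). pose proof (cond_pos eps). split.
    + rewrite !Rabs_left; lra.
    + apply Heps. rewrite /ball /= /AbsRing_ball /abs /minus /plus /Hierarchy.opp /=.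
      rewrite Rabs_left; lra.
Qed.

Lemma Mom_D b1 b2 cs (U : R * R -> Prop) (HU : open U)
  (Hconv : forall eta, U eta -> forall p,
      ex_series (moment_term (hweight b1 cs (fst eta)) p) /\
      ex_series (moment_term (hweight b2 cs (snd eta)) p))
  e n j : U e ->
  Dat (fun e => Mom b1 b2 cs e n j) e /\ th (fun e => Mom b1 b2 cs e n j) e = Mom b1 b2 cs e (S n) j.
Proof.
  intros He. destruct (bigger_pt _ _ (loc_x U HU e He)) as [x1 [Hx1 Ux1]].
  destruct (bigger_pt _ _ (loc_y U HU e He)) as [y1 [Hy1 Uy1]].
  destruct e as [x y]; simpl in *.
  unfold Dat, th, Mom; simpl. destruct (Nat.even j).
  - destruct (mom_1d b1 cs (n + Nat.div2 j) x x1 Hx1 (proj1 (Hconv _ Ux1 _))) as [D1 E1].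
    split; [split; [exact D1|apply ex_derive_const]|].
    rewrite Derive_const E1. rewrite Rmult_0_r Rplus_0_r. reflexivity.
  - destruct (mom_1d b2 cs (n + Nat.div2 j) y y1 Hy1 (proj2 (Hconv _ Uy1 _))) as [D1 E1].
    split; [split; [apply ex_derive_const|exact D1]|].
    rewrite Derive_const E1. rewrite Rmult_0_r Rplus_0_l. reflexivity.
Qed.

Lemma big_sumR N (f : nat -> R) : (\sum_(k < N) f k)%R = sumR N f.
Proof.
  induction N as [|N IH].
  - rewrite big_ord0. reflexivity.
  - rewrite big_ord_recr /= IH. reflexivity.
Qed.

Lemma H_nz_gen (M Sm : mat) (A : mat) (H : nat -> R) n :
  (lead_minor M (S n) <> 0) -> lowerm Sm -> Sm n n = 1 ->
  (forall l, sumR (S n) (fun k => Sm n k * M k l) = A n l) ->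
  (forall l, (l < n)%coq_nat -> A n l = 0) -> A n n = H n -> H n <> 0.
Proof.
  intros Hmin HSl HSd HA Aup Ad Hz. apply Hmin. unfold lead_minor.
  apply/eqP. apply/det0P.
  exists (\row_(k < S n) Sm n (nat_of_ord k))%R.
  - apply/negP => /eqP E. have := congr1 (fun v : 'rV[R]_(S n) => v ord0 ord_max) E.
    rewrite !mxE /= HSd. move=> E1. apply R1_neq_R0. exact E1.
  - apply/rowP => l. rewrite !mxE.
    transitivity (sumR (S n) (fun k => Sm n k * M k (nat_of_ord l))).
    + rewrite -big_sumR. apply eq_bigr => k _. rewrite !mxE. reflexivity.
    + rewrite HA. have Hl := ltn_ord l.
      destruct (Nat.eq_dec (nat_of_ord l) n) as [->|Hne].
      * rewrite Ad Hz. reflexivity.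
      * rewrite Aup; [reflexivity|lia].
Qed.

Lemma eqb_true n : Nat.eqb n n = true. Proof. apply Nat.eqb_refl. Qed.
Lemma eqb_false n m : n <> m -> Nat.eqb n m = false. Proof. apply Nat.eqb_neq. Qed.

Lemma sum_split N m f : (m < N)%coq_nat -> (forall k, (k < m)%coq_nat -> f k = 0) ->
  sumR N f = sumR N (fun k => if Nat.ltb m k then f k else 0) + f m.
Proof.
  intros Hm Hf.
  rewrite (sumR_ext N f (fun k => (if Nat.ltb m k then f k else 0) + (if Nat.eqb k m then f k else 0))).
  - rewrite sumR_plus. f_equal. rewrite (sumR_single _ m); auto.
    + rewrite eqb_true; reflexivity.
    + intros k _ Hk. rewrite eqb_false; auto.
  - intros k Hk. destruct (Nat.ltb_spec m k); destruct (Nat.eqb_spec k m); try lia.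
    + lra.
    + subst; lra.
    + rewrite Hf; [lra|lia].
Qed.

Section Alg.
Set Default Proof Using "All".
Variables (M Sm T L K : mat) (H : nat -> R).
Hypotheses (HS : lower_unitri Sm) (HT : lower_unitri T) (HSL : mmul Sm L = mid)
  (HTK : mmul T K = mid) (HGB : gauss_borel M Sm T H).

Definition Am := mmul Sm M.
Definition Bm k m := sumR (S m) (fun l => M k l * T m l).

Lemma Am_eq n l : Am n l = sumR (S n) (fun k => Sm n k * M k l).
Proof. unfold Am, mmul. rewrite sumR_S (lu_low _ HS n (S n)); [lra|lia]. Qed.

Lemma GB_A n m : sumR (S m) (fun l => Am n l * T m l) = if Nat.eqb n m then H n else 0.
Proof.
  rewrite <- (HGB n m). rewrite sumR_swap. apply sumR_ext. intros l _.
  rewrite Am_eq sumR_mult_r. reflexivity.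
Qed.

Lemma GB_B n m : sumR (S n) (fun k => Sm n k * Bm k m) = if Nat.eqb n m then H n else 0.
Proof.
  rewrite <- (HGB n m). apply sumR_ext. intros k _. unfold Bm.
  rewrite sumR_mult_l. apply sumR_ext. intros; ring.
Qed.

Lemma A_up n : forall m, (m < n)%coq_nat -> Am n m = 0.
Proof.
  intro m. induction m as [m IH] using lt_wf_ind. intros Hm.
  have E := GB_A n m. rewrite sumR_S sumR_zero in E.
  - rewrite (proj2 HT) eqb_false in E; [lra|lia].
  - intros k Hk. rewrite IH; [lra|lia|lia].
Qed.

Lemma A_diag n : Am n n = H n.
Proof.
  have E := GB_A n n. rewrite sumR_S sumR_zero in E.
  - rewrite (proj2 HT) eqb_true in E; lra.
  - intros k Hk. rewrite A_up; [lra|lia].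
Qed.

Lemma B_up m : forall n, (n < m)%coq_nat -> Bm n m = 0.
Proof.
  intro n. induction n as [n IH] using lt_wf_ind. intros Hn.
  have E := GB_B n m. rewrite sumR_S sumR_zero in E.
  - rewrite (proj2 HS) eqb_false in E; [lra|lia].
  - intros k Hk. rewrite IH; [lra|lia|lia].
Qed.

Lemma B_diag n : Bm n n = H n.
Proof.
  have E := GB_B n n. rewrite sumR_S sumR_zero in E.
  - rewrite (proj2 HS) eqb_true in E; lra.
  - intros k Hk. rewrite B_up; [lra|lia].
Qed.

Lemma S_rec n m : (m < n)%coq_nat ->
  Sm n m * H m = - sumR (S n) (fun k => if Nat.ltb m k then Sm n k * Bm k m else 0).
Proof.
  intros Hmn. have E := GB_B n m. rewrite eqb_false in E; [|lia].
  rewrite (sum_split _ m) in E; [|lia|].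
  - rewrite B_diag in E. lra.
  - intros k Hk. rewrite B_up; [lra|lia].
Qed.

Lemma T_rec n m : (n < m)%coq_nat ->
  T m n * H n = - sumR (S m) (fun l => if Nat.ltb n l then Am n l * T m l else 0).
Proof.
  intros Hmn. have E := GB_A n m. rewrite eqb_false in E; [|lia].
  rewrite (sum_split _ n) in E; [|lia|].
  - rewrite A_diag in E. lra.
  - intros k Hk. rewrite A_up; [lra|lia].
Qed.

Lemma A_HK n l : Am n l = H n * K l n.
Proof.
  destruct (inv_lower T K HT HTK) as [HKl HKT].
  have HKlow := lu_low _ HKl. have HTlow := lu_low _ HT.
  have E : sumR (S l) (fun m => sumR (S m) (fun r => Am n r * T m r) * K l m) = H n * K l n.
  { rewrite (sumR_ext _ _ (fun m => (if Nat.eqb n m then H n else 0) * K l m)).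
    2:{ intros m _. rewrite GB_A. reflexivity. }
    destruct (Nat.le_gt_cases n l) as [Hnl|Hnl].
    - rewrite (sumR_single _ n); [|lia|].
      + rewrite eqb_true. reflexivity.
      + intros k _ Hk. rewrite eqb_false; [lra|auto].
    - rewrite sumR_zero.
      + rewrite HKlow; [lra|lia].
      + intros k Hk. rewrite eqb_false; [lra|lia]. }
  rewrite <- E.
  rewrite (sumR_ext _ _ (fun m => sumR (S l) (fun r => Am n r * T m r * K l m))).
  2:{ intros m Hm. rewrite sumR_mult_r. symmetry. apply sumR_ext_len; [lia|].
      intros k Hk1 Hk2. rewrite (HTlow m k); [lra|lia]. }
  rewrite sumR_swap.
  rewrite (sumR_ext _ _ (fun r => Am n r * mmul K T l r)).
  2:{ intros r Hr. unfold mmul. rewrite (sumR_S (S l) (fun k => K l k * T k r)) (HKlow l (S l)); [|lia].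
      rewrite Rmult_0_l Rplus_0_r sumR_mult_l. apply sumR_ext. intros; ring. }
  rewrite HKT. rewrite (sumR_single _ l); [|lia|].
  - rewrite mid_eq. ring.
  - intros k _ Hk. rewrite mid_neq; [ring|lia].
Qed.

Lemma lower_mmul X Y : lowerm X -> lowerm Y -> lowerm (mmul X Y).
Proof.
  intros HX HY i k Hik. unfold mmul. apply sumR_zero. intros l Hl.
  destruct (Nat.le_gt_cases l i) as [H1|H1].
  - rewrite (HY l k); [ring|lia].
  - rewrite (HX i l); [ring|lia].
Qed.

Lemma band1_mmul_lower X Y : lowerm Y -> band1 (mmul X Y).
Proof.
  intros HY i k Hik. unfold mmul. apply sumR_zero. intros l Hl.
  rewrite (HY l k); [ring|lia].
Qed.

Lemma Lam_eq i j : Lam i j = if Nat.eqb j (S i) then 1 else 0.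
Proof. reflexivity. Qed.

Lemma band1_Lam : band1 Lam.
Proof. intros i k Hik. rewrite Lam_eq eqb_false; [reflexivity|lia]. Qed.

Lemma band1_mmul_Lam X : lowerm X -> band1 (mmul X Lam).
Proof.
  intros HX i k Hik. unfold mmul. apply sumR_zero. intros l Hl.
  rewrite Lam_eq. destruct (Nat.eqb_spec k (S l)); [|ring].
  rewrite (HX i l); [ring|lia].
Qed.

Lemma mmul_Lam_l X i j : mmul Lam X i j = X (S i) j.
Proof.
  unfold mmul. rewrite (sumR_single _ (S i)); [|lia|].
  - rewrite Lam_eq eqb_true. ring.
  - intros k _ Hk. rewrite Lam_eq eqb_false; [ring|lia].
Qed.

Lemma Lam_assoc_cond X : lowerm X -> forall i, sumR (S (S i)) (fun l => X i l * Lam l (S (S i))) = 0.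
Proof.
  intros HX i. apply sumR_zero. intros l Hl. rewrite Lam_eq.
  destruct (Nat.eqb_spec (S (S i)) (S l)); [|ring].
  rewrite (HX i l); [ring|lia].
Qed.

Lemma mmul_madd_l X Y Z : mmul (madd X Y) Z = madd (mmul X Z) (mmul Y Z).
Proof.
  extensionality i; extensionality j. unfold mmul, madd. rewrite -sumR_plus.
  apply sumR_ext. intros; ring.
Qed.

Lemma band1_madd X Y : band1 X -> band1 Y -> band1 (madd X Y).
Proof. intros HX HY i k Hk. unfold madd. rewrite HX // HY //. ring. Qed.

Definition Jm := mmul (mmul Sm Lam) L.

Lemma L_props : lower_unitri L /\ mmul L Sm = mid.
Proof. apply inv_lower; auto. Qed.

Lemma LSA : mmul L Am = M.
Proof.
  destruct L_props as [HL HLS]. unfold Am.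
  rewrite -mmul_assoc.
  - rewrite HLS. apply mmul_mid_l.
  - apply lower_band1, lu_low; auto.
  - apply lower_band1, lu_low; auto.
  - apply lower_assoc_cond, lu_low; auto.
Qed.

Lemma phiA X : lowerm X -> mmul (mmul X L) Am = mmul X M.
Proof.
  intros HX. destruct L_props as [HL HLS].
  rewrite mmul_assoc.
  - rewrite LSA. reflexivity.
  - apply lower_band1; auto.
  - apply lower_band1, lu_low; auto.
  - apply lower_assoc_cond, lu_low; auto.
Qed.

Lemma JA : mmul Jm Am = mmul Sm (mmul Lam M).
Proof.
  destruct L_props as [HL HLS]. unfold Jm.
  rewrite mmul_assoc.
  - rewrite LSA. apply mmul_assoc.
    + apply lower_band1, lu_low; auto.
    + apply band1_Lam.
    + apply Lam_assoc_cond, lu_low; auto.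
  - apply band1_mmul_Lam, lu_low; auto.
  - apply lower_band1, lu_low; auto.
  - apply lower_assoc_cond, lu_low; auto.
Qed.

Lemma band1_J : band1 Jm.
Proof. apply band1_mmul_lower. destruct L_props as [HL _]. apply lu_low; auto. Qed.

Lemma J_super n : Jm n (S n) = 1.
Proof.
  destruct L_props as [HL HLS]. have HLl := lu_low _ HL.
  unfold Jm. unfold mmul at 1. rewrite (sumR_single _ (S n)); [|lia|].
  - rewrite (proj2 HL). unfold mmul. rewrite (sumR_single _ n); [|lia|].
    + rewrite (proj2 HS) Lam_eq eqb_true. ring.
    + intros k Hk Hkn. rewrite Lam_eq eqb_false; [ring|lia].
  - intros k Hk Hkn. rewrite (HLl k (S n)); [ring|lia].
Qed.

Lemma phi_up X : (forall i k, (i <= k)%coq_nat -> X i k = 0) ->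
  forall i k, (i <= k)%coq_nat -> mmul X L i k = 0.
Proof.
  intros HX i k Hik. destruct L_props as [HL _]. have HLl := lu_low _ HL.
  unfold mmul. apply sumR_zero. intros l Hl.
  destruct (Nat.le_gt_cases i l) as [H1|H1].
  - rewrite HX; [ring|lia].
  - rewrite (HLl l k); [ring|lia].
Qed.

Lemma XA_T X n m : band1 X -> sumR (S m) (fun l => mmul X Am n l * T m l) = X n m * H m.
Proof.
  intros HX. unfold mmul at 1.
  rewrite (sumR_ext _ _ (fun l => sumR (S (S n)) (fun r => X n r * (Am r l * T m l)))).
  2:{ intros l _. rewrite sumR_mult_r. apply sumR_ext. intros; ring. }
  rewrite sumR_swap.
  rewrite (sumR_ext _ _ (fun r => X n r * (if Nat.eqb r m then H r else 0))).
  2:{ intros r _. rewrite -sumR_mult_l GB_A. reflexivity. }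
  destruct (Nat.lt_ge_cases m (S (S n))) as [Hm|Hm].
  - rewrite (sumR_single _ m); auto.
    + rewrite eqb_true. reflexivity.
    + intros k _ Hk. rewrite eqb_false; [ring|auto].
  - rewrite sumR_zero.
    + rewrite HX; [ring|lia].
    + intros k Hk. rewrite eqb_false; [ring|lia].
Qed.

Lemma AT' Y n m : (forall i k, (i <= k)%coq_nat -> Y i k = 0) ->
  sumR (S m) (fun l => Am n l * Y m l) = H n * mmul Y K m n.
Proof.
  intros HY. unfold mmul. rewrite (sumR_S (S m) (fun l => Y m l * K l n)) (HY m (S m)); [|lia].
  rewrite Rmult_0_l Rplus_0_r sumR_mult_l. apply sumR_ext. intros l _.
  rewrite A_HK. ring.
Qed.

Hypothesis Mshift : forall k l, M k (S (S l)) = M (S k) l.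
Hypothesis Hnz : forall n, H n <> 0.

Lemma J_low n : forall l, (l + 3 <= n)%coq_nat -> Jm n l = 0.
Proof.
  intro l. induction l as [l IH] using lt_wf_ind. intros Hl.
  have E : mmul Jm Am n l = Am n (S (S l)).
  { rewrite JA Am_eq. unfold mmul. rewrite sumR_S (lu_low _ HS n (S n)); [|lia].
    rewrite Rmult_0_l Rplus_0_r. apply sumR_ext. intros k _.
    change (sumR (S (S k)) (fun k0 => Lam k k0 * M k0 l)) with (mmul Lam M k l).
    rewrite mmul_Lam_l Mshift. reflexivity. }
  rewrite A_up in E; [|lia].
  unfold mmul in E. rewrite (sumR_ext_len (S l)) in E; [|lia|].
  - rewrite sumR_S sumR_zero in E.
    + rewrite A_diag in E. have := Hnz l. intros Hn.
      apply (Rmult_eq_reg_r (H l)); [lra|auto].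
    + intros k Hk. rewrite IH; [ring|lia|lia].
  - intros k Hk1 Hk2. rewrite (A_up k l); [ring|lia].
Qed.
End Alg.

Section RowRec.
Variable U : R * R -> Prop.
Hypothesis HU : open U.

Lemma row_rec (x : nat -> R * R -> R) (c : nat -> nat -> R * R -> R) (h : nat -> R * R -> R) N :
  (forall e, U e -> x N e = 1) ->
  (forall m e, (m < N)%coq_nat -> U e ->
     x m e * h m e = - sumR (S N) (fun k => if Nat.ltb m k then x k e * c k m e else 0)) ->
  (forall m, (m < N)%coq_nat -> DU U (h m) /\ forall e, U e -> h m e <> 0) ->
  (forall k m, (m < k)%coq_nat -> (k <= N)%coq_nat -> DU U (c k m)) ->
  forall m, (m <= N)%coq_nat -> DU U (x m).
Proof.
  intros H1 Hrec Hh Hc.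
  assert (Hd : forall d m, (N - m <= d)%coq_nat -> (m <= N)%coq_nat -> DU U (x m)).
  { induction d as [|d IH]; intros m Hmd HmN e He.
    - assert (m = N) by lia. subst. apply (Dat_loc U HU _ (fun _ => 1)); auto. apply Dat_const.
    - destruct (Nat.eq_dec m N) as [->|Hne].
      + apply (Dat_loc U HU _ (fun _ => 1)); auto. apply Dat_const.
      + destruct (Hh m ltac:(lia)) as [Dh Hnz].
        apply (Dat_loc U HU _ (fun e => (- sumR (S N) (fun k => if Nat.ltb m k then x k e * c k m e else 0)) * / h m e)); auto.
        * intros e' He'. rewrite -Hrec; [|lia|auto]. field. apply Hnz; auto.
        * apply Dat_mult; [apply Dat_opp, Dat_sumR|apply Dat_inv; auto].
          intros k Hk. destruct (Nat.ltb_spec m k) as [Hmk|Hmk]; [|apply Dat_const].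
          apply Dat_mult; [apply IH; [lia|lia|auto]|apply Hc; auto; lia]. }
  intros m Hm. apply (Hd (N - m)%nat); lia.
Qed.
End RowRec.

Lemma strict_mmul_lower X Y : (forall i k, (i <= k)%coq_nat -> X i k = 0) -> lowerm Y ->
  forall i k, (i <= k)%coq_nat -> mmul X Y i k = 0.
Proof.
  intros HX HY i k Hik. unfold mmul. apply sumR_zero. intros l Hl.
  destruct (Nat.le_gt_cases i l) as [H1|H1].
  - rewrite HX; [ring|lia].
  - rewrite (HY l k); [ring|lia].
Qed.

Lemma mmul_diag d1 d2 : mmul (diagm d1) (diagm d2) = diagm (fun i => d1 i * d2 i).
Proof.
  extensionality i; extensionality j. unfold mmul.
  rewrite (sumR_single _ i); [|lia|].
  - unfold diagm. rewrite Nat.eqb_refl. destruct (Nat.eqb i j); ring.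
  - intros k _ Hk. unfold diagm. rewrite (proj2 (Nat.eqb_neq i k)); [ring|auto].
Qed.

Lemma LamT_eq i j : LamT i j = if Nat.eqb i (S j) then 1 else 0.
Proof. reflexivity. Qed.

Lemma mmul_LamT X i j : mmul LamT X i j = match i with O => 0 | S i' => X i' j end.
Proof.
  unfold mmul. destruct i as [|i'].
  - apply sumR_zero. intros k _. rewrite LamT_eq. simpl. ring.
  - rewrite (sumR_single _ i'); [|lia|].
    + rewrite LamT_eq Nat.eqb_refl. ring.
    + intros k _ Hk. rewrite LamT_eq (proj2 (Nat.eqb_neq _ _)); [ring|lia].
Qed.

Lemma band1_LamT : band1 LamT.
Proof. intros i k Hik. rewrite LamT_eq (proj2 (Nat.eqb_neq _ _)); [reflexivity|lia]. Qed.

Lemma band1_LamT2 : band1 (mmul LamT LamT).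
Proof.
  intros i k Hik. rewrite mmul_LamT. destruct i as [|i']; [reflexivity|].
  apply band1_LamT. lia.
Qed.

Lemma mmul_band1_diag X d i j : band1 X -> mmul X (diagm d) i j = X i j * d j.
Proof.
  intros HX. unfold mmul. destruct (Nat.lt_ge_cases (S i) j) as [Hj|Hj].
  - rewrite HX; [|lia]. rewrite Rmult_0_l. apply sumR_zero. intros k Hk. unfold diagm.
    rewrite (proj2 (Nat.eqb_neq k j)); [ring|lia].
  - rewrite (sumR_single _ j); [|lia|].
    + unfold diagm. rewrite Nat.eqb_refl. reflexivity.
    + intros k _ Hk. unfold diagm. rewrite (proj2 (Nat.eqb_neq k j)); [ring|auto].
Qed.

Section Main.
Set Default Proof Using "All".
Variables (b1 b2 cs : list R) (U : R * R -> Prop) (HU : open U).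
Hypothesis Hconv : forall eta, U eta -> forall p,
      ex_series (moment_term (hweight b1 cs (fst eta)) p) /\
      ex_series (moment_term (hweight b2 cs (snd eta)) p).
Hypothesis Hminors : forall eta, U eta -> forall N : nat,
      lead_minor (Mom b1 b2 cs eta) N <> 0.
Variables (Sm St Sinv Stinv : R * R -> mat) (H : R * R -> nat -> R).
Hypotheses (HS : forall eta, U eta -> lower_unitri (Sm eta))
  (HSt : forall eta, U eta -> lower_unitri (St eta))
  (HSinv : forall eta, U eta -> mmul (Sm eta) (Sinv eta) = mid)
  (HStinv : forall eta, U eta -> mmul (St eta) (Stinv eta) = mid)
  (HGB : forall eta, U eta -> gauss_borel (Mom b1 b2 cs eta) (Sm eta) (St eta) (H eta)).

Local Notation Mv e := (Mom b1 b2 cs e).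
Local Notation ALG f e He := (f (Mom b1 b2 cs e) (Sm e) (St e) (Sinv e) (Stinv e) (H e)
   (HS e He) (HSt e He) (HSinv e He) (HStinv e He) (HGB e He)).

Lemma MD e n j : U e -> Dat (fun e => Mv e n j) e.
Proof. intros He. exact (proj1 (Mom_D b1 b2 cs U HU Hconv e n j He)). Qed.
Lemma MT e n j : U e -> th (fun e => Mv e n j) e = Mv e (S n) j.
Proof. intros He. exact (proj2 (Mom_D b1 b2 cs U HU Hconv e n j He)). Qed.

Lemma Mshift_all e k l : Mv e k (S (S l)) = Mv e (S k) l.
Proof. rewrite /Mom /=. by rewrite addnS addSn. Qed.

Lemma Hnz e : U e -> forall n, H e n <> 0.
Proof.
  intros He n. apply (H_nz_gen (Mv e) (Sm e) (Am (Mv e) (Sm e)) (H e) n).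
  - apply Hminors; auto.
  - apply lu_low; auto.
  - apply (proj2 (HS e He)).
  - intros l. symmetry. apply (ALG Am_eq e He).
  - intros l Hl. apply (ALG A_up e He); auto.
  - apply (ALG A_diag e He).
Qed.

Lemma D_all N : (forall j, DU U (fun e => Sm e N j)) /\ (forall j, DU U (fun e => St e N j))
  /\ DU U (fun e => H e N).
Proof.
  induction N as [N IH] using lt_wf_ind.
  have DS : forall j, DU U (fun e => Sm e N j).
  { intros j. destruct (Nat.le_gt_cases j N) as [Hj|Hj].
    - apply (row_rec U HU (fun m e => Sm e N m) (fun k m e => Bm (Mv e) (St e) k m) (fun m e => H e m) N).
      + intros e He. exact (proj2 (HS e He) N).
      + intros m e Hm He. exact (ALG S_rec e He N m Hm).
      + intros m Hm. split; [apply (proj2 (proj2 (IH m Hm))) | intros e He; apply Hnz; exact He].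
      + intros k m Hmk HkN e He. unfold Bm. apply Dat_sumR. intros l Hl.
        apply Dat_mult; [apply MD; exact He | apply (proj1 (proj2 (IH m ltac:(lia))) l); exact He].
      + exact Hj.
    - intros e He. apply (Dat_loc U HU _ (fun _ => 0)); [exact He| |apply Dat_const].
      intros e' He'. apply (lu_low _ (HS e' He')). exact Hj. }
  have DH : DU U (fun e => H e N).
  { intros e He. apply (Dat_loc U HU _ (fun e => Am (Mv e) (Sm e) N N)); [exact He| |].
    - intros e' He'. symmetry. apply (ALG A_diag e' He').
    - unfold Am, mmul. apply Dat_sumR. intros k Hk.
      apply Dat_mult; [apply DS; exact He|apply MD; exact He]. }
  split; [exact DS|split; [|exact DH]].
  intros j. destruct (Nat.le_gt_cases j N) as [Hj|Hj].
  - apply (row_rec U HU (fun m e => St e N m) (fun k m e => Am (Mv e) (Sm e) m k) (fun m e => H e m) N).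
    + intros e He. exact (proj2 (HSt e He) N).
    + intros m e Hm He. rewrite (ALG T_rec e He m N Hm). f_equal. apply sumR_ext.
      intros k _. destruct (Nat.ltb m k); ring.
    + intros m Hm. split; [apply (proj2 (proj2 (IH m Hm))) | intros e He; apply Hnz; exact He].
    + intros k m Hmk HkN e He. unfold Am, mmul. apply Dat_sumR. intros l Hl.
      apply Dat_mult; [apply (proj1 (IH m ltac:(lia)) l); exact He | apply MD; exact He].
    + exact Hj.
  - intros e He. apply (Dat_loc U HU _ (fun _ => 0)); [exact He| |apply Dat_const].
    intros e' He'. apply (lu_low _ (HSt e' He')). exact Hj.
Qed.

Lemma Sp_strict e : U e -> forall i k, (i <= k)%coq_nat -> theta_mat Sm e i k = 0.
Proof.
  intros He i k Hik. change (th (fun e => Sm e i k) e = 0).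
  destruct (Nat.eq_dec i k) as [<-|Hne].
  - rewrite (th_loc U HU _ (fun _ => 1) e He); [apply th_const|].
    intros e' He'. exact (proj2 (HS e' He') i).
  - rewrite (th_loc U HU _ (fun _ => 0) e He); [apply th_const|].
    intros e' He'. apply (lu_low _ (HS e' He')). lia.
Qed.

Lemma Tp_strict e : U e -> forall i k, (i <= k)%coq_nat -> theta_mat St e i k = 0.
Proof.
  intros He i k Hik. change (th (fun e => St e i k) e = 0).
  destruct (Nat.eq_dec i k) as [<-|Hne].
  - rewrite (th_loc U HU _ (fun _ => 1) e He); [apply th_const|].
    intros e' He'. exact (proj2 (HSt e' He') i).
  - rewrite (th_loc U HU _ (fun _ => 0) e He); [apply th_const|].
    intros e' He'. apply (lu_low _ (HSt e' He')). lia.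
Qed.

Lemma strict_lower X : (forall i k, (i <= k)%coq_nat -> X i k = 0) -> lowerm X.
Proof. intros HX i k Hik. apply HX. lia. Qed.

Lemma DA e n l : U e -> Dat (fun e => Am (Mv e) (Sm e) n l) e.
Proof.
  intros He. unfold Am, mmul. apply Dat_sumR. intros k Hk.
  apply Dat_mult; [apply (proj1 (D_all n)); exact He|apply MD; exact He].
Qed.

Lemma E2 e (He : U e) n m :
  (mmul (theta_mat Sm e) (Sinv e) n m + Jm (Sm e) (Sinv e) n m) * H e m
   + H e n * mmul (theta_mat St e) (Stinv e) m n = if Nat.eqb n m then theta_vec H e n else 0.
Proof.
  set G := fun e' => sumR (S m) (fun l => Am (Mv e') (Sm e') n l * St e' m l).
  have HG : th G e = if Nat.eqb n m then theta_vec H e n else 0.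
  { rewrite (th_loc U HU G (fun e' => if Nat.eqb n m then H e' n else 0) e He).
    - destruct (Nat.eqb n m); [reflexivity | apply th_const].
    - intros e' He'. apply (ALG GB_A e' He'). }
  rewrite -HG. unfold G.
  rewrite th_sumR.
  2:{ intros l _. apply Dat_mult; [apply DA; exact He|apply (proj1 (proj2 (D_all m))); exact He]. }
  rewrite (sumR_ext _ _ (fun l => th (fun e => Am (Mv e) (Sm e) n l) e * St e m l
        + Am (Mv e) (Sm e) n l * theta_mat St e m l)).
  2:{ intros l _. apply th_mult; [apply DA; exact He|apply (proj1 (proj2 (D_all m))); exact He]. }
  rewrite sumR_plus.
  rewrite (ALG AT' e He (theta_mat St e) n m (Tp_strict e He)).
  set X := madd (mmul (theta_mat Sm e) (Sinv e)) (Jm (Sm e) (Sinv e)).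
  have Eth : forall l, th (fun e => Am (Mv e) (Sm e) n l) e = mmul X (Am (Mv e) (Sm e)) n l.
  { intros l. change (th (fun e => sumR (S (S n)) (fun k => Sm e n k * Mv e k l)) e
                      = mmul X (Am (Mv e) (Sm e)) n l).
    rewrite th_sumR.
    2:{ intros k _. apply Dat_mult; [apply (proj1 (D_all n)); exact He|apply MD; exact He]. }
    rewrite (sumR_ext _ _ (fun k => theta_mat Sm e n k * Mv e k l + Sm e n k * Mv e (S k) l)).
    2:{ intros k _. rewrite th_mult; [|apply (proj1 (D_all n)); exact He|apply MD; exact He].
        rewrite MT; [reflexivity|exact He]. }
    rewrite sumR_plus. unfold X. rewrite (ALG mmul_madd_l e He). unfold madd.
    rewrite (ALG phiA e He (theta_mat Sm e)); [|apply strict_lower, Sp_strict; exact He].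
    rewrite (ALG JA e He). f_equal.
    change (mmul (Sm e) (mmul Lam (Mv e)) n l) with (sumR (S (S n)) (fun k => Sm e n k * mmul Lam (Mv e) k l)).
    apply sumR_ext. intros k _. rewrite (ALG mmul_Lam_l e He). reflexivity. }
  rewrite (sumR_ext _ _ (fun l => mmul X (Am (Mv e) (Sm e)) n l * St e m l)).
  2:{ intros l _. rewrite Eth. reflexivity. }
  rewrite (ALG XA_T e He X n m).
  - unfold X, madd. ring.
  - unfold X. apply (ALG band1_madd e He).
    + apply lower_band1, (ALG lower_mmul e He); [apply strict_lower, Sp_strict; exact He|].
      apply lu_low. exact (proj1 (ALG L_props e He)).
    + apply (ALG band1_J e He).
Qed.

Lemma final eta : U eta ->
    let J := mmul (mmul (Sm eta) Lam) (Sinv eta) in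
    let alpha := fun n => J n n in
    let beta := fun n => J (S n) n in
    let gamma := fun n => J (S (S n)) n in
    let phi := mmul (theta_mat Sm eta) (Sinv eta) in
    let phit := mmul (theta_mat St eta) (Stinv eta) in
    mmul (diagm (theta_vec H eta)) (diagm (fun n => / H eta n)) = diagm alpha /\
    mopp phi = madd (mmul (mmul LamT LamT) (diagm gamma)) (mmul LamT (diagm beta)) /\
    mopp phit = mmul LamT (mmul (diagm (fun n => H eta (S n))) (diagm (fun n => / H eta n))).
Proof.
  intros He. cbv zeta.
  set e := eta.
  have E := E2 e He. have Hn := Hnz e He.
  have Hp : forall i k, (i <= k)%coq_nat -> mmul (theta_mat Sm e) (Sinv e) i k = 0.
  { apply strict_mmul_lower; [apply Sp_strict; exact He|].
    apply lu_low. exact (proj1 (ALG L_props e He)). }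
  have Hq : forall i k, (i <= k)%coq_nat -> mmul (theta_mat St e) (Stinv e) i k = 0.
  { apply strict_mmul_lower; [apply Tp_strict; exact He|].
    apply lu_low. exact (proj1 (inv_lower _ _ (HSt e He) (HStinv e He))). }
  have Jsup := ALG J_super e He. have Jb := ALG band1_J e He.
  have Jl := ALG J_low e He (Mshift_all e) Hn.
  unfold Jm in Jsup, Jb, Jl, E.
  set J := mmul (mmul (Sm e) Lam) (Sinv e) in Jsup Jb Jl E *.
  set phi := mmul (theta_mat Sm e) (Sinv e) in Hp E *.
  set phit := mmul (theta_mat St e) (Stinv e) in Hq E *.
  split; [|split].
  - rewrite mmul_diag. extensionality i; extensionality j. unfold diagm.
    destruct (Nat.eqb_spec i j) as [<-|Hij]; [|reflexivity].
    have Ei := E i i. rewrite Nat.eqb_refl (Hp i i) in Ei; [|lia]. rewrite (Hq i i) in Ei; [|lia].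
    rewrite -Ei. field. exact (Hn i).
  - extensionality i; extensionality j. unfold mopp, madd.
    rewrite (mmul_band1_diag (mmul LamT LamT)); [|apply band1_LamT2].
    rewrite (mmul_band1_diag LamT); [|apply band1_LamT].
    rewrite mmul_LamT.
    destruct (Nat.lt_ge_cases j i) as [Hji|Hij].
    + have Ephi : phi i j = - J i j.
      { have Eij := E i j. rewrite eqb_false in Eij; [|lia]. rewrite (Hq j i) in Eij; [|lia].
        have Hnj := Hn j.
        apply (Rmult_eq_reg_r (H e j)); [|exact Hnj]. lra. }
      rewrite Ephi. destruct i as [|i']; [lia|].
      rewrite !LamT_eq.
      destruct (Nat.eqb_spec (S i') (S j)) as [Hs|Hs].
      * injection Hs as ->. rewrite eqb_false; [|lia]. ring.
      * destruct (Nat.eqb_spec i' (S j)) as [->|Hs2].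
        -- ring.
        -- rewrite Jl; [ring|lia].
    + rewrite Hp; [|lia]. destruct i as [|i']; rewrite !LamT_eq; rewrite !eqb_false; try lia; ring.
  - extensionality i; extensionality j. unfold mopp.
    rewrite mmul_LamT mmul_diag. destruct i as [|i'].
    + rewrite Hq; [ring|lia].
    + unfold diagm. destruct (Nat.eqb_spec i' j) as [<-|Hne].
      * have Ei := E i' (S i'). rewrite eqb_false in Ei; [|lia].
        rewrite (Hp i' (S i')) in Ei; [|lia]. rewrite Jsup in Ei.
        have Hni := Hn i'. apply (Rmult_eq_reg_l (H e i')); [|exact Hni].
        field_simplify; [|exact Hni]. lra.
      * destruct (Nat.le_gt_cases (S i') j) as [Hle|Hgt].
        -- rewrite Hq; [ring|lia].
        -- have Ej := E j (S i'). rewrite eqb_false in Ej; [|lia].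
           rewrite (Hp j (S i')) in Ej; [|lia]. rewrite (Jb j (S i')) in Ej; [|lia].
           have Hnj := Hn j.
           have : H e j * phit (S i') j = 0 by lra.
           intros Hz. apply Rmult_integral in Hz. destruct Hz as [Hz|Hz]; [contradiction|].
           rewrite Hz. ring.
Qed.

End Main.

Theorem mainTheorem16
  (b1 b2 cs : list R)
  (* the c_j are not non-positive integers, so the weights are defined *)
  (Hc : forall c, List.In c cs -> forall k, poch c k <> 0)
  (* open region of (eta1, eta2) on which everything below holds *)
  (U : R * R -> Prop) (HU : open U)
  (* convergent moment series *)
  (Hconv : forall eta, U eta -> forall p,
      ex_series (moment_term (hweight b1 cs (fst eta)) p) /\
      ex_series (moment_term (hweight b2 cs (snd eta)) p))
  (* all leading principal minors nonzero *)
  (Hminors : forall eta, U eta -> forall N : nat,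
      lead_minor (Mom b1 b2 cs eta) N <> 0)
  (* Gauss--Borel factorization M = S^{-1} H St^{-T}, depending on eta *)
  (Sm St Sinv Stinv : R * R -> mat) (H : R * R -> nat -> R)
  (HS : forall eta, U eta -> lower_unitri (Sm eta))
  (HSt : forall eta, U eta -> lower_unitri (St eta))
  (HSinv : forall eta, U eta -> mmul (Sm eta) (Sinv eta) = mid)
  (HStinv : forall eta, U eta -> mmul (St eta) (Stinv eta) = mid)
  (HGB : forall eta, U eta -> gauss_borel (Mom b1 b2 cs eta) (Sm eta) (St eta) (H eta)) :
  forall eta, U eta ->
    let J := mmul (mmul (Sm eta) Lam) (Sinv eta) in      (* S Lambda S^{-1} *)
    let alpha := fun n => J n n in
    let beta := fun n => J (S n) n in
    let gamma := fun n => J (S (S n)) n in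
    let phi := mmul (theta_mat Sm eta) (Sinv eta) in
    let phit := mmul (theta_mat St eta) (Stinv eta) in
    (* (theta H) H^{-1} = alpha *)
    mmul (diagm (theta_vec H eta)) (diagm (fun n => / H eta n)) = diagm alpha /\
    (* - phi = (Lambda^T)^2 gamma + Lambda^T beta *)
    mopp phi = madd (mmul (mmul LamT LamT) (diagm gamma)) (mmul LamT (diagm beta)) /\
    (* - phit = Lambda^T (a_- H) H^{-1} *)
    mopp phit = mmul LamT (mmul (diagm (fun n => H eta (S n))) (diagm (fun n => / H eta n))).
Proof.
  intros eta He.
  exact (final b1 b2 cs U HU Hconv Hminors Sm St Sinv Stinv H HS HSt HSinv HStinv HGB eta He).
Qed.
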